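(* Let $D=\operatorname{diag}(d_1,\dots,d_n)$ with $d_i>0$, $Q$ a positive diagonal $n\times n$ matrix, $1\le p\le\infty$, and $L\in\mathbb{R}^{N\times N}$ symmetric with nonpositive off-diagonal entries and $L\mathbf{1}=0$. Then $M^+_{p,Q}[-L\otimes D]=0$.
   Context: On $\mathbb{R}^{nN}$, with $u=(u_1^T,\dots,u_N^T)^T$, $\|u\|_{p,Q}=\big\|(\|Qu_1\|_p,\dots,\|Qu_N\|_p)^T\big\|_p$, and $M^+_{p,Q}[f]=\sup_{u\neq v}\lim_{h\to0^+}\frac1h\left(\frac{\|u-v+h(f(u)-f(v))\|_{p,Q}}{\|u-v\|_{p,Q}}-1\right)$, applied to the linear map $u\mapsto-(L\otimes D)u$. *)

(* Defs.v *)
From HB Require Import structures.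
From mathcomp Require Import all_boot all_order all_algebra.
From mathcomp Require Import all_classical all_reals all_analysis.
From mathcomp Require Import mxtens.
Set Implicit Arguments. Unset Strict Implicit. Unset Printing Implicit Defensive.
Import Order.TTheory GRing.Theory Num.Theory.
Import numFieldNormedType.Exports.
Local Open Scope classical_set_scope.
Local Open Scope ring_scope.

Section Defs.
Variable R : realType.

Definition pnorm (p : \bar R) (k : nat) (x : 'cV[R]_k) : R :=
  match p with
  | +oo%E => \big[Num.max/0]_(i < k) `|x i 0|
  | r%:E => (\sum_(i < k) `|x i 0| `^ r) `^ r^-1
  | -oo%E => 0 (* never used: p >= 1 *)
  end.

(* the a-th block u_a in R^n of u = (u_1^T, ..., u_N^T)^T in R^{nN};
   indexing consistent with the Kronecker product *t (index a*n+i) *)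
Definition blk (N n : nat) (u : 'cV[R]_(N * n)) (a : 'I_N) : 'cV[R]_n :=
  \col_i u (mxtens_index (a, i)) 0.

Definition wnorm (p : \bar R) (N n : nat) (Q : 'M[R]_n) (u : 'cV[R]_(N * n)) : R :=
  pnorm p (\col_(a < N) pnorm p (Q *m blk u a)).

Definition Mquot (p : \bar R) (N n : nat) (Q : 'M[R]_n)
  (f : 'cV[R]_(N * n) -> 'cV[R]_(N * n)) (u v : 'cV[R]_(N * n)) (h : R) : R :=
  h^-1 * (wnorm p Q (u - v + h *: (f u - f v)) / wnorm p Q (u - v) - 1).

Definition Mplus (p : \bar R) (N n : nat) (Q : 'M[R]_n)
  (f : 'cV[R]_(N * n) -> 'cV[R]_(N * n)) : \bar R :=
  ereal_sup [set (lim (Mquot p Q f uv.1 uv.2 h @[h --> 0^'+]))%:E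
            | uv in [set uv : 'cV[R]_(N * n) * 'cV[R]_(N * n) | uv.1 != uv.2]].
End Defs.

(* Main.v *)
Require Import Defs.
From HB Require Import structures.
From mathcomp Require Import all_boot all_order all_algebra.
From mathcomp Require Import all_classical all_reals all_analysis.
From mathcomp Require Import mxtens.
From mathcomp Require Import ring lra.
Import Order.TTheory GRing.Theory Num.Theory.
Import numFieldNormedType.Exports.
Local Open Scope classical_set_scope.
Local Open Scope ring_scope.
Section Core.
Variable R : realType.
Variable V : lmodType R.
Variable nu : V -> R.
Hypothesis tri : forall x y, nu (x + y) <= nu x + nu y.
Hypothesis hom : forall (c : R) x, nu (c *: x) = `|c| * nu x.

Definition gq (x y : V) (h : R) := h^-1 * (nu (x + h *: y) / nu x - 1).

Lemma gq_mono x y : 0 < nu x -> forall s t, 0 < s -> s <= t -> gq x y s <= gq x y t.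
Proof.
move=> ax s t s0 st.
have t0 : 0 < t by apply: lt_le_trans st.
have key : nu (x + s *: y) <= (1 - s / t) * nu x + (s / t) * nu (x + t *: y).
  have -> : x + s *: y = (1 - s/t) *: x + (s/t) *: (x + t *: y).
    rewrite scalerDr scalerA mulfVK ?gt_eqF // scalerBl scale1r.
    by rewrite addrA subrK.
  apply: (le_trans (tri _ _)); rewrite !hom ger0_norm ?ger0_norm //.
    by rewrite divr_ge0 // ltW.
  by rewrite subr_ge0 ler_pdivrMr // mul1r.
rewrite /gq.
have -> : s^-1 * (nu (x + s *: y) / nu x - 1) = (nu (x + s *: y) - nu x) / (s * nu x).
  by field; rewrite ?gt_eqF.
have -> : t^-1 * (nu (x + t *: y) / nu x - 1) = (nu (x + t *: y) - nu x) / (t * nu x).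
  by field; rewrite ?gt_eqF.
rewrite ler_pdivrMr ?mulr_gt0 //.
have -> : (nu (x + t *: y) - nu x) / (t * nu x) * (s * nu x) = s / t * (nu (x + t *: y) - nu x).
  by field; rewrite ?gt_eqF.
by rewrite mulrBr; lra.
Qed.

Lemma gq_lb x y : 0 < nu x -> forall h, 0 < h -> - (nu y / nu x) <= gq x y h.
Proof.
move=> ax h h0.
have : nu x <= nu (x + h *: y) + h * nu y.
  have := tri (x + h *: y) ((- h) *: y).
  by rewrite hom normrN ger0_norm ?(ltW h0) // scaleNr addrK.
move=> H; rewrite /gq.
have -> : h^-1 * (nu (x + h *: y) / nu x - 1) = (nu (x + h *: y) - nu x) / (h * nu x).
  by field; rewrite ?gt_eqF.
rewrite ler_pdivlMr ?mulr_gt0 //.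
have -> : - (nu y / nu x) * (h * nu x) = - (h * nu y) by field; rewrite gt_eqF.
lra.
Qed.
Lemma gq_cvg x y : 0 < nu x ->
  gq x y h @[h --> 0^'+] --> inf (gq x y @` [set` `]0, +oo[%R]).
Proof.
move=> ax; apply: nondecreasing_at_right_cvgr => //.
- move=> s t; rewrite !in_itv /= !andbT => s0 t0 st.
  by apply: gq_mono.
- exists (- (nu y / nu x)) => _ [h + <-]; rewrite /= in_itv /= andbT => h0.
  exact: gq_lb.
Qed.

Lemma gq_lim_le x y : 0 < nu x -> forall h, 0 < h ->
  lim (gq x y h @[h --> 0^'+]) <= gq x y h.
Proof.
move=> ax h h0; rewrite (cvg_lim _ (gq_cvg x y ax)) //.
apply: ge_inf; last by exists h => //=; rewrite in_itv /= andbT.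
exists (- (nu y / nu x)) => _ [k + <-]; rewrite /= in_itv /= andbT => k0.
exact: gq_lb.
Qed.

Lemma gq_is_cvg x y : 0 < nu x -> cvg (gq x y h @[h --> 0^'+]).
Proof. by move=> ax; apply/cvg_ex; eexists; apply: gq_cvg. Qed.
End Core.
Section Max.
Variable R : realType.
Lemma bm_ge0 k (G : 'I_k -> R) : 0 <= \big[Num.max/0]_(i < k) G i.
Proof. by apply: (big_rec (fun x => 0 <= x)) => // i x _ x0; rewrite le_max x0 orbT. Qed.
Lemma bm_ub k (G : 'I_k -> R) i : G i <= \big[Num.max/0]_(i < k) G i.
Proof. by rewrite (bigD1 i) //= le_max lexx. Qed.
Lemma bm_le k (G : 'I_k -> R) c : 0 <= c -> (forall i, G i <= c) ->
  \big[Num.max/0]_(i < k) G i <= c.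
Proof.
move=> c0 H; apply: (big_ind (fun x => x <= c)).
- exact: c0.
- by move=> a b ac bc; rewrite ge_max ac.
- by move=> i _; apply: H.
Qed.
End Max.
Section Flat.
Variables (R : realType) (N n : nat).
Lemma sum_tens (F : 'I_(N*n) -> R) :
  \sum_(a < N) \sum_(i < n) F (mxtens_index (a,i)) = \sum_j F j.
Proof.
rewrite pair_big /= (reindex (@mxtens_unindex N n)).
  by apply: eq_bigr => j _; rewrite -surjective_pairing mxtens_unindexK.
by exists (@mxtens_index N n) => i _; rewrite (mxtens_indexK, mxtens_unindexK).
Qed.
Lemma Qblk (Q : 'M[R]_n) (x : 'cV[R]_(N*n)) a i : is_diag_mx Q ->
  (Q *m blk x a) i 0 = Q i i * x (mxtens_index (a, i)) 0.
Proof.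
move=> /is_diag_mxP hQ; rewrite mxE (bigD1 i) //= big1 ?addr0.
  by rewrite mxE.
by move=> k ki; rewrite hQ ?mul0r // eq_sym.
Qed.
End Flat.
Section Jensen.
Variable R : realType.
Lemma jensen (I : finType) (w y : I -> R) r : 1 <= r ->
  (forall i, 0 <= w i) -> \sum_i w i = 1 -> (forall i, 0 <= y i) ->
  (\sum_i w i * y i) `^ r <= \sum_i w i * (y i `^ r).
Proof.
move=> r1 w0 w1 y0.
have r0 : 0 < r by apply: lt_le_trans r1.
set mu := \sum_i w i * y i.
have mu0 : 0 <= mu by apply: sumr_ge0 => i _; apply: mulr_ge0.
have [->|rn1] := eqVneq r 1.
  rewrite powRr1 //; apply: ler_sum => i _; rewrite powRr1 //.
have r1' : 1 < r by rewrite lt_neqAle eq_sym rn1.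
have [mu00|mup] := eqVneq mu 0.
  rewrite mu00 powR0 ?gt_eqF //; apply: sumr_ge0 => i _.
  by apply: mulr_ge0 => //; apply: powR_ge0.
have mupos : 0 < mu by rewrite lt_neqAle eq_sym mup.
pose q := r / (r - 1).
have rm1 : 0 < r - 1 by rewrite subr_gt0.
have q0 : 0 < q by rewrite divr_gt0.
have rq : r^-1 + q^-1 = 1 by rewrite /q invf_div; field; rewrite gt_eqF.
have hmq : (mu `^ (r - 1)) `^ q = mu `^ r.
  by rewrite -powRrM; congr (_ `^ _); rewrite /q; field; rewrite gt_eqF.
have young : forall i, y i * mu `^ (r - 1) <= y i `^ r / r + mu `^ r / q.
  move=> i; rewrite -hmq; apply: conjugate_powR => //; apply: powR_ge0.
have e1 : mu `^ r = \sum_i w i * (y i * mu `^ (r - 1)).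
  rewrite -mulr_powRB1 // {1}/mu mulr_suml; apply: eq_bigr => i _.
  by rewrite mulrA.
have e2 : mu `^ r <= (\sum_i w i * y i `^ r) / r + mu `^ r / q.
  rewrite {1}e1; apply: le_trans (ler_sum _ (fun i _ => ler_wpM2l (w0 i) (young i))) _.
  rewrite (eq_bigr (fun i => (w i * y i `^ r) / r + w i * (mu `^ r / q))); last first.
    by move=> i _; rewrite mulrDr !mulrA.
  by rewrite big_split /= -!mulr_suml w1 mul1r.
set X := mu `^ r in e2 *; set Y := \sum_i w i * y i `^ r in e2 *.
have : X * r^-1 <= Y * r^-1.
  have -> : X * r^-1 = X - X / q.
    have -> : r^-1 = 1 - q^-1 by rewrite -rq addrK.
    by rewrite mulrBr mulr1.
  by rewrite lerBlDr.
by rewrite ler_pM2r // invr_gt0.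
Qed.
End Jensen.
Section Norms.
Variables (R : realType) (N n : nat) (Q : 'M[R]_n).
Hypothesis hQ : is_diag_mx Q.
Hypothesis Qpos : forall i, 0 < Q i i.

Definition qq (j : 'I_(N*n)) := Q (mxtens_unindex j).2 (mxtens_unindex j).2.
Definition yv (x : 'cV[R]_(N*n)) j := qq j * x j 0.

Lemma qq_gt0 j : 0 < qq j. Proof. exact: Qpos. Qed.
Lemma yvD x z j : yv (x + z) j = yv x j + yv z j.
Proof. by rewrite /yv mxE mulrDr. Qed.
Lemma yvZ (c : R) x j : yv (c *: x) j = c * yv x j.
Proof. by rewrite /yv mxE mulrCA. Qed.
Lemma yv_idx x a i : yv x (mxtens_index (a, i)) = Q i i * x (mxtens_index (a, i)) 0.
Proof. by rewrite /yv /qq mxtens_indexK. Qed.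

Lemma nz_yv x : x != 0 -> exists j, 0 < `|yv x j|.
Proof.
move=> xn0; case: (pselect (exists j, 0 < `|yv x j|)) => // H; exfalso.
move/eqP: xn0; apply; apply/matrixP => j k; rewrite ord1 mxE.
have : `|yv x j| <= 0 by rewrite leNgt; apply/negP => Hp; apply: H; exists j.
rewrite normr_le0 /yv mulf_eq0 => /orP[|/eqP //].
by rewrite gt_eqF ?qq_gt0.
Qed.

Lemma powle (r x y : R) : 0 <= r -> 0 <= x -> x <= y -> x `^ r <= y `^ r.
Proof. by move=> r0 x0 xy; apply: ge0_ler_powR; rewrite ?nnegrE // (le_trans x0). Qed.

Variable P : 'M[R]_(N*n).
Hypothesis hP0 : forall j l, 0 <= P j l.
Hypothesis hrow : forall j, \sum_l P j l = 1.
Hypothesis hcol : forall l, \sum_j P j l = 1.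
Hypothesis hcomm : forall j l, qq j * P j l = P j l * qq l.

Lemma yvP x j : yv (P *m x) j = \sum_l P j l * yv x l.
Proof.
rewrite /yv mxE mulr_sumr; apply: eq_bigr => l _.
by rewrite mulrA hcomm -mulrA.
Qed.

Lemma yvP_le x j : `|yv (P *m x) j| <= \sum_l P j l * `|yv x l|.
Proof.
rewrite yvP; apply: le_trans (ler_norm_sum _ _ _) _.
by apply: ler_sum => l _; rewrite normrM ger0_norm.
Qed.


Section Fin.
Variable r : R.
Hypothesis r1 : 1 <= r.
Local Notation nuf := (@wnorm R r%:E N n Q).
Let r0 : 0 < r. Proof. by apply: lt_le_trans r1. Qed.

Definition S x := \sum_j `|yv x j| `^ r.
Lemma S_ge0 x : 0 <= S x. Proof. by apply: sumr_ge0 => j _; apply: powR_ge0. Qed.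

Lemma wnorm_fin x : nuf x = S x `^ r^-1.
Proof.
rewrite /wnorm /pnorm; congr (_ `^ _).
transitivity (\sum_(a < N) \sum_(i < n) `|yv x (mxtens_index (a,i))| `^ r); last exact: (@sum_tens R N n (fun j => `|yv x j| `^ r)).
apply: eq_bigr => a _.
rewrite mxE ger0_norm ?powR_ge0 // -powRrM mulVf ?gt_eqF // powRr1; last first.
  by apply: sumr_ge0 => i _; apply: powR_ge0.
by apply: eq_bigr => i _; rewrite Qblk // yv_idx.
Qed.

Lemma powK (y : R) : 0 <= y -> (y `^ r^-1) `^ r = y.
Proof. by move=> y0; rewrite -powRrM mulVf ?gt_eqF // powRr1. Qed.
Lemma powK' (y : R) : 0 <= y -> (y `^ r) `^ r^-1 = y.
Proof. by move=> y0; rewrite -powRrM mulfV ?gt_eqF // powRr1. Qed.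

Lemma fin_hom (c : R) x : nuf (c *: x) = `|c| * nuf x.
Proof.
rewrite !wnorm_fin /S.
rewrite (eq_bigr (fun j => `|c| `^ r * `|yv x j| `^ r)); last first.
  by move=> j _; rewrite yvZ normrM powRM.
by rewrite -mulr_sumr powRM ?powK' // ?powR_ge0 ?sumr_ge0 // => j _; apply: powR_ge0.
Qed.

Lemma fin_pos x : x != 0 -> 0 < nuf x.
Proof.
move=> /nz_yv [j yj]; rewrite wnorm_fin; apply: powR_gt0.
rewrite /S (bigD1 j) //=; apply: ltr_pwDl; first exact: powR_gt0.
by apply: sumr_ge0 => i _; apply: powR_ge0.
Qed.

Lemma powRVb (a : R) : 0 < a -> (a^-1) `^ r = (a `^ r)^-1.
Proof.
move=> a0; apply: (@mulIf _ (a `^ r)); first by rewrite gt_eqF // powR_gt0.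
rewrite -powRM ?invr_ge0 ?(ltW a0) // mulVf ?gt_eqF // mulVf ?gt_eqF ?powR_gt0 //.
by rewrite powR1.
Qed.

Lemma conv2 (l u v : R) : 0 <= l <= 1 -> 0 <= u -> 0 <= v ->
  (l * u + (1 - l) * v) `^ r <= l * u `^ r + (1 - l) * v `^ r.
Proof.
move=> /andP[l0 l1] u0 v0.
have := @jensen R bool (fun b => if b then l else 1 - l) (fun b => if b then u else v) r r1.
rewrite !big_bool /=; apply.
- by case; rewrite // subr_ge0.
- by rewrite addrC subrK.
- by case.
Qed.

Lemma fin_tri x z : nuf (x + z) <= nuf x + nuf z.
Proof.
have [->|xn0] := eqVneq x 0.
  by have := fin_hom 0 0; rewrite scale0r normr0 mul0r add0r => ->; rewrite add0r.
have [->|zn0] := eqVneq z 0.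
  by have := fin_hom 0 0; rewrite scale0r normr0 mul0r addr0 => ->; rewrite addr0.
have a0 := fin_pos x xn0; have b0 := fin_pos z zn0.
move: a0 b0; move Ea : (nuf x) => a; move Eb : (nuf z) => b => a0 b0.
have ab0 : 0 < a + b by rewrite addr_gt0.
pose l := a / (a + b).
have l01 : 0 <= l <= 1.
  by rewrite /l divr_ge0 ?(ltW a0) ?(ltW ab0) //= ler_pdivrMr // mul1r lerDl (ltW b0).
have Sa : S x = a `^ r by rewrite -Ea wnorm_fin powK // S_ge0.
have Sb : S z = b `^ r by rewrite -Eb wnorm_fin powK // S_ge0.
have key : S (x + z) <= (a + b) `^ r.
  have step : forall j, `|yv (x + z) j| `^ r <=
      (a + b) `^ r * (l * (`|yv x j| / a) `^ r + (1 - l) * (`|yv z j| / b) `^ r).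
    move=> j; rewrite yvD.
    have e : `|yv x j| + `|yv z j| =
        (a + b) * (l * (`|yv x j| / a) + (1 - l) * (`|yv z j| / b)).
      by rewrite /l; field; rewrite ?gt_eqF.
    apply: le_trans (powle _ _ _ (ltW r0) (normr_ge0 _) (ler_normD _ _)) _.
    have hl0 : 0 <= l by case/andP: l01.
    have hl1 : 0 <= 1 - l by case/andP: l01 => _; rewrite subr_ge0.
    have u0 : 0 <= `|yv x j| / a by rewrite divr_ge0 // ltW.
    have v0 : 0 <= `|yv z j| / b by rewrite divr_ge0 // ltW.
    rewrite e powRM; last 2 first.
    - exact: ltW.
    - by rewrite addr_ge0 // mulr_ge0.
    apply: ler_wpM2l; first exact: powR_ge0.
    exact: conv2.
  apply: le_trans (ler_sum _ (fun j _ => step j)) _.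
  rewrite -mulr_sumr big_split /= -!mulr_sumr.
  have -> : \sum_i (`|yv x i| / a) `^ r = 1.
    under eq_bigr => i _ do rewrite powRM ?invr_ge0 ?(ltW a0) // (powRVb _ a0).
    by rewrite -mulr_suml -/(S x) Sa mulfV // gt_eqF // powR_gt0.
  have -> : \sum_i (`|yv z i| / b) `^ r = 1.
    under eq_bigr => i _ do rewrite powRM ?invr_ge0 ?(ltW b0) // (powRVb _ b0).
    by rewrite -mulr_suml -/(S z) Sb mulfV // gt_eqF // powR_gt0.
  by rewrite !mulr1 addrC subrK mulr1.
rewrite wnorm_fin -(powK' _ (ltW ab0)); apply: powle => //; first by rewrite invr_ge0 ltW.
exact: S_ge0.
Qed.
Lemma fin_contr x : nuf (P *m x) <= nuf x.
Proof.
rewrite !wnorm_fin; apply: powle; first by rewrite invr_ge0 ltW.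
  exact: S_ge0.
rewrite /S.
apply: (@le_trans _ _ (\sum_j \sum_l P j l * `|yv x l| `^ r)).
  apply: ler_sum => j _; apply: (@le_trans _ _ ((\sum_l P j l * `|yv x l|) `^ r)).
    by apply: powle; rewrite ?normr_ge0 ?(ltW r0) ?yvP_le.
  by apply: jensen => // l.
rewrite exchange_big /=; apply: ler_sum => l _.
by rewrite -mulr_suml hcol mul1r.
Qed.

End Fin.

Section Inf.
Local Notation nui := (@wnorm R +oo%E N n Q).

Lemma inf_ge0 x : 0 <= nui x.
Proof. exact: bm_ge0. Qed.

Lemma inf_ub x j : `|yv x j| <= nui x.
Proof.
case: (mxtens_indexP j) => a i.
rewrite yv_idx -Qblk //; rewrite /wnorm /pnorm.
apply: le_trans (bm_ub _ _ _ a); rewrite mxE [X in _ <= X]ger0_norm ?bm_ge0 //.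
exact: (bm_ub _ _ (fun i => `|(Q *m blk x a) i 0|) i).
Qed.

Lemma inf_le x c : 0 <= c -> (forall j, `|yv x j| <= c) -> nui x <= c.
Proof.
move=> c0 H; rewrite /wnorm /pnorm; apply: bm_le => // a.
rewrite mxE ger0_norm ?bm_ge0 //; apply: bm_le => // i.
by rewrite Qblk // -yv_idx.
Qed.

Lemma inf_tri x z : nui (x + z) <= nui x + nui z.
Proof.
apply: inf_le; first by rewrite addr_ge0 ?inf_ge0.
move=> j; rewrite yvD; apply: le_trans (ler_normD _ _) _.
by apply: lerD; apply: inf_ub.
Qed.

Lemma inf_homle (c : R) x : nui (c *: x) <= `|c| * nui x.
Proof.
apply: inf_le; first by rewrite mulr_ge0 ?inf_ge0.
by move=> j; rewrite yvZ normrM ler_wpM2l ?inf_ub.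
Qed.

Lemma inf_hom (c : R) x : nui (c *: x) = `|c| * nui x.
Proof.
apply/eqP; rewrite eq_le inf_homle /=.
have [->|c0] := eqVneq c 0; first by rewrite normr0 mul0r inf_ge0.
have := inf_homle c^-1 (c *: x); rewrite scalerA mulVf // scale1r.
rewrite normfV => H; rewrite -ler_pdivlMl ?normr_gt0 //.
Qed.

Lemma inf_pos x : x != 0 -> 0 < nui x.
Proof. by move=> /nz_yv [j yj]; apply: lt_le_trans yj (inf_ub x j). Qed.

Lemma inf_contr x : nui (P *m x) <= nui x.
Proof.
apply: inf_le; first exact: inf_ge0.
move=> j; apply: le_trans (yvP_le x j) _.
apply: (@le_trans _ _ (\sum_l P j l * nui x)).
  by apply: ler_sum => l _; apply: ler_wpM2l => //; apply: inf_ub.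
by rewrite -mulr_suml hrow mul1r.
Qed.
End Inf.
End Norms.
Section TT.
Variables (R : realType) (N n : nat) (D Q : 'M[R]_n) (L : 'M[R]_N).
Hypothesis hD : is_diag_mx D.
Hypothesis Dpos : forall i, 0 < D i i.
Hypothesis LT : L^T = L.
Hypothesis Loff : forall a b : 'I_N, a != b -> L a b <= 0.
Hypothesis L1 : L *m (const_mx 1 : 'cV[R]_N) = 0.

Local Notation T := (tensmx L D).

Lemma Lrow a : \sum_b L a b = 0.
Proof.
have := congr1 (fun M : 'cV[R]_N => M a 0) L1; rewrite !mxE => H.
rewrite -[RHS]H; apply: eq_bigr => b _; by rewrite ?mxE mulr1.
Qed.

Lemma Lsym a b : L a b = L b a.
Proof. by have := congr1 (fun M : 'M[R]_N => M b a) LT; rewrite mxE. Qed.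

Lemma Lcol b : \sum_a L a b = 0.
Proof.
transitivity (\sum_a L b a); last exact: Lrow.
by apply: eq_bigr => a _; rewrite Lsym.
Qed.

Lemma Trow j : \sum_l T j l = 0.
Proof.
rewrite (eq_bigr (fun l => (fun b => L (mxtens_unindex j).1 b) (mxtens_unindex l).1 *
   (fun k => D (mxtens_unindex j).2 k) (mxtens_unindex l).2)); last first.
  by move=> l _; rewrite mxE.
by rewrite -mulr_sum Lrow mul0r.
Qed.

Lemma Tcol l : \sum_j T j l = 0.
Proof.
transitivity ((\sum_a L a (mxtens_unindex l).1) * (\sum_i D i (mxtens_unindex l).2)).
  by rewrite mulr_sum; apply: eq_bigr => j _; rewrite mxE.
by rewrite Lcol mul0r.
Qed.

Lemma Toff j l : j != l -> T j l <= 0.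
Proof.
case: (mxtens_indexP j) => a i; case: (mxtens_indexP l) => b k jl.
rewrite tensmxE; have [ik|ik] := eqVneq i k.
  subst k; apply: mulr_le0_ge0; last exact: ltW.
  apply: Loff; apply: contraNneq jl => ->; by [].
by rewrite (is_diag_mxP hD) ?mulr0.
Qed.

Lemma Tcomm j l : qq R N n Q j * T j l = T j l * qq R N n Q l.
Proof.
case: (mxtens_indexP j) => a i; case: (mxtens_indexP l) => b k.
rewrite tensmxE /qq !mxtens_indexK /=; have [ik|ik] := eqVneq i k.
  by subst k; rewrite mulrC.
by rewrite (is_diag_mxP hD) ?mulr0 ?mul0r.
Qed.

Lemma Tker : T *m (const_mx 1 : 'cV[R]_(N*n)) = 0.
Proof.
apply/matrixP => j k; rewrite !mxE; transitivity (\sum_l T j l); last exact: Trow.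
by apply: eq_bigr => l _; rewrite !mxE mulr1.
Qed.

Definition h0 := (1 + \sum_j `|T j j|)^-1.
Lemma h0_gt0 : 0 < h0.
Proof. by rewrite invr_gt0 ltr_pwDl // sumr_ge0. Qed.

Lemma PE h j l : (1%:M - h *: T) j l = (j == l)%:R - h * T j l.
Proof. by rewrite !mxE. Qed.

Lemma sum_delta (j : 'I_(N*n)) : \sum_l ((j == l)%:R : R) = 1.
Proof.
rewrite (bigD1 j) //= eqxx big1 ?addr0 // => l lj.
by rewrite eq_sym (negbTE lj).
Qed.
Lemma sum_delta' (l : 'I_(N*n)) : \sum_j ((j == l)%:R : R) = 1.
Proof.
rewrite (bigD1 l) //= eqxx big1 ?addr0 // => j jl.
by rewrite (negbTE jl).
Qed.

Variable h : R.
Hypothesis hpos : 0 < h.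
Hypothesis hle : h <= h0.
Local Notation P := (1%:M - h *: T).

Lemma P0 j l : 0 <= P j l.
Proof.
rewrite PE; have [<-|jl] := eqVneq j l.
  rewrite subr_ge0.
  have K0 : 0 < 1 + \sum_i `|T i i| by rewrite ltr_pwDl // sumr_ge0.
  apply: (@le_trans _ _ (h * `|T j j|)); first by apply: ler_wpM2l; [exact: ltW | exact: ler_norm].
  apply: (@le_trans _ _ (h * (1 + \sum_i `|T i i|))).
    rewrite ler_wpM2l ?(ltW hpos) //; rewrite (bigD1 j) //= addrCA ler_wpDr //.
    by rewrite addr_ge0 // sumr_ge0.
  by rewrite -ler_pdivlMr // div1r.
rewrite /= sub0r oppr_ge0 mulr_ge0_le0 ?(ltW hpos) //; exact: Toff.
Qed.

Lemma Prow j : \sum_l P j l = 1.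
Proof.
under eq_bigr do rewrite PE.
by rewrite sumrB sum_delta -mulr_sumr Trow mulr0 subr0.
Qed.

Lemma Pcol l : \sum_j P j l = 1.
Proof.
under eq_bigr do rewrite PE.
by rewrite sumrB sum_delta' -mulr_sumr Tcol mulr0 subr0.
Qed.

Lemma Pcomm j l : qq R N n Q j * P j l = P j l * qq R N n Q l.
Proof.
rewrite PE; have [<-|jl] := eqVneq j l; first by rewrite mulrC.
by rewrite /= !sub0r mulrN mulNr mulrCA Tcomm mulrA.
Qed.
End TT.
Lemma wn_props (R : realType) (N n : nat) (Q : 'M[R]_n) (hQ : is_diag_mx Q)
  (Qpos : forall i, 0 < Q i i) (p : \bar R) : (1 <= p)%E ->
  [/\ forall x z : 'cV[R]_(N*n), wnorm p Q (x + z) <= wnorm p Q x + wnorm p Q z,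
      forall (c : R) (x : 'cV[R]_(N*n)), wnorm p Q (c *: x) = `|c| * wnorm p Q x,
      forall x : 'cV[R]_(N*n), x != 0 -> 0 < wnorm p Q x &
      forall P : 'M[R]_(N*n), (forall j l, 0 <= P j l) ->
        (forall j, \sum_l P j l = 1) -> (forall l, \sum_j P j l = 1) ->
        (forall j l, qq R N n Q j * P j l = P j l * qq R N n Q l) ->
        forall x, wnorm p Q (P *m x) <= wnorm p Q x].
Proof.
case: p => [r| |] p1.
- have r1 : 1 <= r by rewrite -lee_fin.
  split.
  + exact: (@fin_tri R N n Q hQ Qpos r r1).
  + exact: (@fin_hom R N n Q hQ r r1).
  + exact: (@fin_pos R N n Q hQ Qpos r r1).
  + by move=> P h1 h2 h3 h4 x; exact: (@fin_contr R N n Q hQ P h1 h2 h3 h4 r r1 x).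
- split.
  + exact: (@inf_tri R N n Q hQ).
  + exact: (@inf_hom R N n Q hQ).
  + exact: (@inf_pos R N n Q hQ Qpos).
  + by move=> P h1 h2 h3 h4 x; exact: (@inf_contr R N n Q hQ P h1 h2 h4 x).
- by exfalso; move: p1; rewrite leeNy_eq.
Qed.

Theorem proposition5 (R : realType) (n N : nat) (D Q : 'M[R]_n) (p : \bar R)
    (L : 'M[R]_N) :
  (0 < n)%N -> (0 < N)%N ->
  is_diag_mx D -> (forall i, 0 < D i i) ->
  is_diag_mx Q -> (forall i, 0 < Q i i) ->
  (1 <= p)%E ->
  L^T = L ->
  (forall a b : 'I_N, a != b -> L a b <= 0) ->
  L *m (const_mx 1 : 'cV[R]_N) = 0 ->
  let f := fun u : 'cV[R]_(N * n) => - (tensmx L D) *m u in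
  (forall u v : 'cV[R]_(N * n), u != v ->
     cvg (Mquot (N:=N) p Q f u v h @[h --> 0^'+])) /\
  Mplus (N:=N) p Q f = 0%E.
Proof.
move=> n0 N0 hD Dpos hQ Qpos p1 LT Loff L1 f.
have [tri hom pos contr] := @wn_props R N n Q hQ Qpos p p1.
pose V := 'cV[R]_(N * n).
pose nu := @wnorm R p N n Q : V -> R.
have fB : forall u v : V, f u - f v = - (tensmx L D *m (u - v)).
  by move=> u v; rewrite /f -mulmxBr mulNmx.
have Mq : forall u v : V, (fun h => Mquot (N:=N) p Q f u v h) = gq R V nu (u - v) (f u - f v).
  by [].
have posx : forall u v : V, u != v -> 0 < nu (u - v).
  by move=> u v uv; apply: pos; rewrite subr_eq0.
split.
  move=> u v uv; rewrite Mq; exact: (@gq_is_cvg R V nu tri hom _ _ (posx u v uv)).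
apply/eqP; rewrite eq_le; apply/andP; split.
  apply/ereal_supP => _ [[u v] /= uv <-]; rewrite lee_fin.
  set h := h0 R N n D L.
  have hp : 0 < h := h0_gt0 R N n D L.
  rewrite Mq; apply: le_trans (@gq_lim_le R V nu tri hom _ (f u - f v) (posx u v uv) h hp) _.
  rewrite /gq; apply: mulr_ge0_le0; first by rewrite invr_ge0 ltW.
  rewrite subr_le0 ler_pdivrMr ?posx // mul1r.
  have -> : u - v + h *: (f u - f v) = (1%:M - h *: tensmx L D) *m (u - v).
    by rewrite fB mulmxBl mul1mx -scalemxAl scalerN.
  apply: contr.
  - exact: (@P0 R N n D L hD Dpos Loff h hp (lexx _)).
  - exact: (@Prow R N n D L L1 h).
  - exact: (@Pcol R N n D L LT L1 h).
  - exact: (@Pcomm R N n D Q L hD h).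
apply: le_ereal_sup_tmp; exists 0%:E => //.
have Nn : (0 < N * n)%N by rewrite muln_gt0 N0 n0.
exists ((const_mx 1 : V), (0 : V)) => /=.
  apply/negP => /eqP /matrixP /(_ (Ordinal Nn) 0); rewrite !mxE => /eqP.
  by rewrite oner_eq0.
rewrite Mq; congr (_%:E).
have -> : gq R V nu ((const_mx 1 : V) - 0) (f (const_mx 1) - f 0) = fun=> 0.
  apply/funext => h; rewrite /gq fB subr0 (@Tker R N n D L L1).
  rewrite (_ : const_mx 1 + h *: - 0 = const_mx 1); last first.
    by apply/matrixP => i j; rewrite !mxE oppr0 mulr0 addr0.
  rewrite mulfV ?subrr ?mulr0 //.
  by rewrite gt_eqF // pos // ; apply/negP => /eqP /matrixP /(_ (Ordinal Nn) 0); rewrite !mxE => /eqP; rewrite oner_eq0.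
exact: lim_cst.
Qed.
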